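(* In a $\$$-bounded contract, for all $\mathcal{A}\subseteq\mathbb{A}$ (possibly infinite), all mempools $\mathcal{P}\subseteq\mathbb{X}$ and all states $s$, there exists a finite $\mathcal{A}_0\subseteq\mathcal{A}$ such that for every $\mathcal{B}$ with $\mathcal{A}_0\subseteq\mathcal{B}\subseteq\mathcal{A}$, $\mathrm{MEV}_{\mathcal{A}_0}(s,\mathcal{P})=\mathrm{MEV}_{\mathcal{B}}(s,\mathcal{P})$.
   Context: Fix a countably infinite set $\mathbb{A}$ of actors, a set $\mathbb{T}$ of token types and a set $\mathbb{X}$ of transactions. A wallet is a function $\mathbb{T}\to\mathbb{N}$; $\mathbb{W}_{\mathrm{fin}}$ is the set of finite-support wallets. A wallet state is $W:\mathbb{A}\to(\mathbb{T}\to\mathbb{N})$ satisfying the finite tokens axiom $\sum_{\tau}\sum_{a\in\mathbb{A}}W(a)(\tau)\in\mathbb{N}$. A contract consists of blockchain states $\mathbb{S}=\mathbb{C}\times\mathbb{W}$ (contract state, wallet state), a partial transition function $\mapsto:(\mathbb{S}\times\mathbb{X})\rightharpoonup\mathbb{S}$ and initial states $\mathbb{S}_0$. A transaction $x$ is valid in $s$ if $s\xmapsto{x}s'$ for some $s'$. For finite sequences, $s\xrightarrow{\varepsilon}s$, and $s\xrightarrow{\vec{Y}x}s'$ iff either $s\xrightarrow{\vec{Y}}s''\xmapsto{x}s'$, or $s\xrightarrow{\vec{Y}}s'$ and $x$ is not valid in $s'$. States are assumed reachable from $\mathbb{S}_0$. $W_{\mathcal{A}}(s)=\sum_{a\in\mathcal{A}}W(s)(a)$.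 A wealth function is an additive map $\$:\mathbb{W}_{\mathrm{fin}}\to\mathbb{N}$; $\$_{\mathcal{A}}(s)=\$(W_{\mathcal{A}}(s))$; the gain is $G_{\mathcal{A}}(s,\vec{X})=\$_{\mathcal{A}}(s')-\$_{\mathcal{A}}(s)$ where $s\xrightarrow{\vec X}s'$. The contract is $\$$-bounded if for every $s_0\in\mathbb{S}_0$ there is $n$ such that $\$_{\mathbb{A}}(s)<n$ for all $s$ reachable from $s_0$. A transaction deducibility function $\kappa:\mathcal{P}(\mathbb{A})\times\mathcal{P}(\mathbb{X})\to\mathcal{P}(\mathbb{X})$, $(\mathcal{A},\mathcal{X})\mapsto\kappa_{\mathcal{A}}(\mathcal{X})$, satisfies: extensivity $\mathcal{X}\subseteq\kappa_{\mathcal{A}}(\mathcal{X})$; idempotence $\kappa_{\mathcal{A}}(\kappa_{\mathcal{A}}(\mathcal{X}))=\kappa_{\mathcal{A}}(\mathcal{X})$; monotonicity in both arguments; continuity $\kappa_{\mathcal{A}}(\bigcup_i\mathcal{X}_i)=\bigcup_i\kappa_{\mathcal{A}}(\mathcal{X}_i)$ for increasing chains; finite causes (every finite $\mathcal{X}_0$ is contained in $\kappa_{\mathcal{A}_0}(\emptyset)$ for some finite $\mathcal{A}_0$); private knowledge ($\kappa_{\mathcal{A}}(\emptyset)\subseteq\kappa_{\mathcal{A}'}(\emptyset)$ implies $\mathcal{A}\subseteq\mathcal{A}'$); no shared secrets ($\kappa_{\mathcal{A}}(\mathcal{X})\cap\kappa_{\mathcal{B}}(\mathcal{X})\subseteq\kappa_{\mathcal{A}\cap\mathcal{B}}(\mathcal{X})$).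 $\mathcal{X}^*$ denotes finite sequences over $\mathcal{X}$. The unrealized gain is $\mathrm{uG}_{\mathcal{A}}(s)=\max\{G_{\mathcal{A}}(s,\vec{Y}):\vec{Y}\in\kappa_{\mathcal{A}}(\emptyset)^*\}$; the external gain is $\mathrm{xG}_{\mathcal{A}}(s,\vec{Y})=G_{\mathcal{A}}(s,\vec{Y})-\mathrm{uG}_{\mathcal{A}}(s)$; $\mathrm{MEV}_{\mathcal{A}}(s,\mathcal{P})=\max\{\mathrm{xG}_{\mathcal{A}}(s,\vec{Y}):\vec{Y}\in\kappa_{\mathcal{A}}(\mathcal{P})^*\}$. *)

(* Defs.v *)
From HB Require Import structures.
From mathcomp Require Import all_boot all_order all_algebra.
From mathcomp Require Import boolp classical_sets functions cardinality fsbigop.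

Set Implicit Arguments.
Unset Strict Implicit.
Unset Printing Implicit Defensive.
Import Order.TTheory GRing.Theory Num.Theory.
Local Open Scope classical_set_scope.

Definition wallet (T : Type) := T -> nat.

Definition wfin (T : Type) (w : wallet T) : Prop :=
  finite_set [set t | w t <> 0%N].

(* Finite tokens axiom: sum_tau sum_a W(a)(tau) is a natural number,
   i.e. only finitely many (a, tau) have W(a)(tau) <> 0. *)
Definition finite_tokens (Act T : Type) (W : Act -> wallet T) : Prop :=
  finite_set [set p : Act * T | W p.1 p.2 <> 0%N].

Definition wstate (Act T : Type) := {W : Act -> wallet T | finite_tokens W}.

Definition bstate (Act T C : Type) := (C * wstate Act T)%type.

Definition Wof (Act T C : Type) (s : bstate Act T C) : Act -> wallet T :=
  proj1_sig s.2.

Definition WA (Act : choiceType) (T C : Type) (A : set Act)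
  (s : bstate Act T C) : wallet T :=
  fun t => (\sum_(a \in A) Wof s a t)%R.

(* an additive map $ : W_fin -> nat (values outside W_fin are irrelevant) *)
Definition additive_wealth (T : Type) (wealth : wallet T -> nat) : Prop :=
  forall w1 w2 : wallet T, wfin w1 -> wfin w2 ->
    wealth (fun t => (w1 t + w2 t)%N) = (wealth w1 + wealth w2)%N.

Definition wealthA (Act : choiceType) (T C : Type) (wealth : wallet T -> nat)
  (A : set Act) (s : bstate Act T C) : nat := wealth (WA A s).

(* step s x = Some s' iff s |-x-> s'; None iff x is not valid in s. *)
Definition transition (Act T C X : Type) :=
  bstate Act T C -> X -> option (bstate Act T C).

(* s -[Ys]-> s' : invalid transactions are skipped *)
Definition exec (Act T C X : Type) (step : transition Act T C X)
  (s : bstate Act T C) (Ys : seq X) : bstate Act T C :=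
  foldl (fun s' x => odflt s' (step s' x)) s Ys.

Definition reachable (Act T C X : Type) (step : transition Act T C X)
  (S0 : set (bstate Act T C)) (s : bstate Act T C) : Prop :=
  exists s0, S0 s0 /\ exists Ys : seq X, exec step s0 Ys = s.

Definition wealth_bounded (Act : choiceType) (T C X : Type)
  (wealth : wallet T -> nat) (step : transition Act T C X)
  (S0 : set (bstate Act T C)) : Prop :=
  forall s0, S0 s0 -> exists n : nat, forall Ys : seq X,
    (wealthA wealth setT (exec step s0 Ys) < n)%N.

Record deducibility (Act X : Type) (kappa : set Act -> set X -> set X)
  : Prop := Deducibility {
  ded_extensive : forall A Xs, Xs `<=` kappa A Xs;
  ded_idempotent : forall A Xs, kappa A (kappa A Xs) = kappa A Xs;
  ded_monotone : forall A A' Xs Xs', A `<=` A' -> Xs `<=` Xs' ->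
      kappa A Xs `<=` kappa A' Xs';
  ded_continuous : forall A (Xi : nat -> set X),
      (forall i, Xi i `<=` Xi i.+1) ->
      kappa A (\bigcup_i Xi i) = \bigcup_i kappa A (Xi i);
  ded_finite_causes : forall X0 : set X, finite_set X0 ->
      exists A0 : set Act, finite_set A0 /\ X0 `<=` kappa A0 set0;
  ded_private_knowledge : forall A A',
      kappa A set0 `<=` kappa A' set0 -> A `<=` A';
  ded_no_shared_secrets : forall A B Xs,
      kappa A Xs `&` kappa B Xs `<=` kappa (A `&` B) Xs }.

(* the maximum of a set of integers (0 if it has no maximum; in a
   $-bounded contract all the maxima used below exist) *)
Definition maxZ (S : set int) : int :=
  match pselect (exists m : int, S m /\ (forall x, S x -> (x <= m)%R)) with
  | left h => proj1_sig (cid h)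
  | right _ => 0%R
  end.

Definition seq_in (X : Type) (Xs : set X) (Ys : seq X) : Prop :=
  foldr (fun y acc => Xs y /\ acc) True Ys.

Definition gain (Act : choiceType) (T C X : Type) (wealth : wallet T -> nat)
  (step : transition Act T C X) (A : set Act) (s : bstate Act T C)
  (Ys : seq X) : int :=
  ((wealthA wealth A (exec step s Ys))%:Z - (wealthA wealth A s)%:Z)%R.

Definition uG (Act : choiceType) (T C X : Type) (wealth : wallet T -> nat)
  (step : transition Act T C X) (kappa : set Act -> set X -> set X)
  (A : set Act) (s : bstate Act T C) : int :=
  maxZ [set g | exists Ys, seq_in (kappa A set0) Ys /\ g = gain wealth step A s Ys].

Definition xG (Act : choiceType) (T C X : Type) (wealth : wallet T -> nat)
  (step : transition Act T C X) (kappa : set Act -> set X -> set X)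
  (A : set Act) (s : bstate Act T C) (Ys : seq X) : int :=
  (gain wealth step A s Ys - uG wealth step kappa A s)%R.

Definition MEV (Act : choiceType) (T C X : Type) (wealth : wallet T -> nat)
  (step : transition Act T C X) (kappa : set Act -> set X -> set X)
  (A : set Act) (s : bstate Act T C) (P : set X) : int :=
  maxZ [set g | exists Ys, seq_in (kappa A P) Ys /\
                           g = xG wealth step kappa A s Ys].

(* Main.v *)
Require Import Defs.
From mathcomp Require Import all_boot all_order all_algebra.
From mathcomp Require Import boolp classical_sets functions cardinality fsbigop.
From mathcomp Require Import zify.
Set Implicit Arguments.
Unset Strict Implicit.
Unset Printing Implicit Defensive.
Import Order.TTheory GRing.Theory Num.Theory.
Local Open Scope classical_set_scope.


Lemma split_sum {Act : choiceType} (f : Act -> nat) (B B' : set Act) :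
  finite_set [set a | f a <> 0%N] -> B `<=` B' ->
  (\sum_(a \in B') f a = \sum_(a \in B) f a + \sum_(a \in B' `\` B) f a)%R.
Proof.
move=> fin BB'.
rewrite [LHS]fsbig_supp [in RHS]fsbig_supp [X in (_ + X)%R]fsbig_supp.
have -> : B' `&` f @^-1` [set~ 0%R] =
  (B `&` f @^-1` [set~ 0%R]) `|` ((B' `\` B) `&` f @^-1` [set~ 0%R]).
  rewrite -setIUl; congr (_ `&` _).
  apply/seteqP; split => x /=.
    by move=> Bx; case: (pselect (B x)) => h; [left|right].
  by case=> [/BB'|[]].
rewrite fsbigU //.
- exact: finite_setIr.
- exact: finite_setIr.
by move=> x [[Bx _] [[_ nBx] _]].
Qed.

Definition TK {Act : choiceType} {T C : Type} (s : bstate Act T C) := [set p : Act * T | @Wof Act T C s p.1 p.2 <> 0%N].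

Lemma TK_fin {Act : choiceType} {T C : Type} (s : bstate Act T C) : finite_set (TK s).
Proof. exact: (proj2_sig s.2). Qed.

Lemma supp_fin {Act : choiceType} {T C : Type} (s : bstate Act T C) t : finite_set [set a : Act | @Wof Act T C s a t <> 0%N].
Proof.
apply: (sub_finite_set _ (finite_image fst (TK_fin s))).
by move=> a /= h; exists (a, t).
Qed.

Lemma WA_split {Act : choiceType} {T C : Type} (B B' : set Act) (s : bstate Act T C) : B `<=` B' ->
  WA B' s = fun t => (WA B s t + WA (B' `\` B) s t)%N.
Proof.
move=> BB'; apply: funext => t; rewrite /WA.
by rewrite (split_sum (supp_fin s t) BB').
Qed.

Lemma WA_wfin {Act : choiceType} {T C : Type} (D : set Act) (s : bstate Act T C) : wfin (WA D s).
Proof.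
apply: (sub_finite_set _ (finite_image snd (TK_fin s))).
move=> t /= h; apply: contrapT => nh; apply: h; rewrite /WA fsbig1 //.
move=> a _; apply: contrapT => ne; apply: nh; by exists (a, t).
Qed.

Lemma wealth_mono {Act : choiceType} {T C : Type} (wealth : wallet T -> nat) (B B' : set Act) (s : bstate Act T C) :
  additive_wealth wealth -> B `<=` B' ->
  (wealthA wealth B s <= wealthA wealth B' s)%N.
Proof.
move=> hw BB'; rewrite /wealthA (WA_split s BB') hw.
- exact: leq_addr.
- exact: WA_wfin.
- exact: WA_wfin.
Qed.

Lemma wealth_eq {Act : choiceType} {T C : Type} (wealth : wallet T -> nat) (B B' : set Act) (s : bstate Act T C) :
  B `<=` B' -> (forall a, B' a -> ~ B a -> forall t, Wof s a t = 0%N) ->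
  wealthA wealth B s = wealthA wealth B' s.
Proof.
move=> BB' h; rewrite /wealthA (WA_split s BB'); congr wealth.
apply: funext => t.
have -> : WA (B' `\` B) s t = 0%N.
  by rewrite /WA fsbig1 // => a [B'a nBa]; apply: h.
by rewrite addn0.
Qed.

Lemma exec_cat {Act : choiceType} {T C X : Type} (step : transition Act T C X) (s : bstate Act T C) Y1 Y2 :
  exec step s (Y1 ++ Y2) = exec step (exec step s Y1) Y2.
Proof. by rewrite /exec foldl_cat. Qed.

Lemma seq_in_mono {X : Type} (Xs Xs' : set X) Y : Xs `<=` Xs' -> seq_in Xs Y -> seq_in Xs' Y.
Proof.
move=> sub; elim: Y => //= y Y IH [h1 h2]; split; [exact: sub | exact: IH].
Qed.

Lemma seq_in_fin {Act : choiceType} {X : Type} (kappa : set Act -> set X -> set X) (A : set Act) Q Y :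
  deducibility kappa -> seq_in (kappa A Q) Y ->
  exists F, [/\ finite_set F, F `<=` A & seq_in (kappa F Q) Y].
Proof.
move=> hk; elim: Y => [|y Y IH] /=.
  by move=> _; exists set0; split => //; exact: finite_set0.
case=> hy /IH [F [Ffin FA HF]].
have [F0 [F0fin F0y]] := ded_finite_causes hk (finite_set1 y).
have yF0 : kappa F0 Q y :=
  ded_monotone hk (@subset_refl _ F0) (sub0set Q) (F0y y erefl).
have yAF0 : kappa (A `&` F0) Q y by apply: (ded_no_shared_secrets hk); split.
exists (F `|` (A `&` F0)); split.
- rewrite finite_setU; split => //; exact: finite_setIr.
- by move=> a [/FA|[]].
split.
  by apply: (ded_monotone hk _ (@subset_refl _ Q) yAF0) => a h; right.
apply: seq_in_mono HF; apply: (ded_monotone hk _ (@subset_refl _ Q)) => a h; by left.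
Qed.

Lemma maxZ_eq (S : set int) m : S m -> (forall x, S x -> (x <= m)%R) -> maxZ S = m.
Proof.
move=> Sm Hm; rewrite /maxZ; case: pselect => [h|nh]; last first.
  by exfalso; apply: nh; exists m.
case: cid => m' [Sm' Hm'] /=.
have h1 := Hm _ Sm'; have h2 := Hm' _ Sm; lia.
Qed.

Lemma nat_max (Pn : nat -> Prop) n k0 : Pn k0 -> (forall k, Pn k -> (k < n)%N) ->
  exists m, Pn m /\ forall k, Pn k -> (k <= m)%N.
Proof.
move=> Pk0 hb; apply: contrapT => nomax.
have H : forall j, exists k, Pn k /\ (j <= k)%N.
  elim => [|j [k [Pk jk]]]; first by exists k0.
  have : ~ (forall k', Pn k' -> (k' <= k)%N) by move=> h; apply: nomax; exists k.
  move=> /existsNP [k' /not_implyP [Pk' nk']]; exists k'; split => //.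
  move/negP: nk'; rewrite -ltnNge => kk'; exact: leq_ltn_trans jk kk'.
have [k [Pk nk]] := H n; have := hb _ Pk; lia.
Qed.

Lemma max_transfer {X : Type} (QB QA : seq X -> Prop) (gB gA : seq X -> int) Y :
  QB Y -> gB Y = gA Y -> (forall Z, QA Z -> (gA Z <= gA Y)%R) ->
  (forall Z, QB Z -> QA Z) -> (forall Z, QB Z -> (gB Z <= gA Z)%R) ->
  maxZ [set g | exists Z, QB Z /\ g = gB Z] = gA Y.
Proof.
move=> QBY eY hA hsub hle; apply: maxZ_eq; first by exists Y.
move=> x [Z [QZ ->]]; apply: le_trans (hle _ QZ) _; exact: hA (hsub _ QZ).
Qed.


Theorem mainTheorem13
  (Act : choiceType) (T C X : Type)
  (hAct : exists f : nat -> Act, bijective f)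
  (wealth : wallet T -> nat) (hwealth : additive_wealth wealth)
  (kappa : set Act -> set X -> set X) (hkappa : deducibility kappa)
  (step : transition Act T C X) (S0 : set (bstate Act T C))
  (hbounded : wealth_bounded wealth step S0)
  (A : set Act) (P : set X) (s : bstate Act T C)
  (hs : reachable step S0 s) :
  exists A0 : set Act, [/\ finite_set A0, A0 `<=` A &
    forall B : set Act, A0 `<=` B -> B `<=` A ->
      MEV wealth step kappa A0 s P = MEV wealth step kappa B s P].
Proof.
have [s0 [S0s0 [Ys0 es]]] := hs.
have [n hn] := hbounded s0 S0s0.
have bnd : forall B Y, (wealthA wealth B (exec step s Y) < n)%N.
  move=> B Y; have := hn (Ys0 ++ Y); rewrite exec_cat es; apply: leq_ltn_trans.
  exact: wealth_mono hwealth (subsetT B).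
pose v Y := wealthA wealth A (exec step s Y).
have [m2 [[Y2 [HY2 eY2]] Hm2]] : exists m, (exists Y, seq_in (kappa A set0) Y /\ v Y = m)
   /\ forall k, (exists Y, seq_in (kappa A set0) Y /\ v Y = k) -> (k <= m)%N.
  apply: (@nat_max _ n (v [::])); first by exists [::].
  by move=> k [Y [_ <-]]; apply: bnd.
have [m1 [[Y1 [HY1 eY1]] Hm1]] : exists m, (exists Y, seq_in (kappa A P) Y /\ v Y = m)
   /\ forall k, (exists Y, seq_in (kappa A P) Y /\ v Y = k) -> (k <= m)%N.
  apply: (@nat_max _ n (v [::])); first by exists [::].
  by move=> k [Y [_ <-]]; apply: bnd.
have [F1 [F1fin F1A HF1]] := seq_in_fin hkappa HY1.
have [F2 [F2fin F2A HF2]] := seq_in_fin hkappa HY2.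
pose H (s' : bstate Act T C) := [set a : Act | exists t, Wof s' a t <> 0%N].
have Hfin : forall s', finite_set (H s').
  move=> s'; apply: (sub_finite_set _ (finite_image fst (TK_fin s'))).
  by move=> a [t ht]; exists (a, t).
pose A0 := ((A `&` H s) `|` (A `&` H (exec step s Y1))) `|`
           ((A `&` H (exec step s Y2)) `|` (F1 `|` F2)).
have A0A : A0 `<=` A.
  by move=> a [[[]|[]]|[[]|[/F1A|/F2A]]].
have key : forall B, A0 `<=` B -> B `<=` A ->
    MEV wealth step kappa B s P = MEV wealth step kappa A s P.
  move=> B A0B BA.
  have heq : forall s', A `&` H s' `<=` B -> wealthA wealth B s' = wealthA wealth A s'.
    move=> s' hsub; apply: wealth_eq BA _ => a Aa nBa t.
    apply: contrapT => ne; apply: nBa; apply: hsub; split => //; by exists t.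
  have hs_ : wealthA wealth B s = wealthA wealth A s.
    by apply: heq => a h; apply: A0B; left; left.
  have hs1 : wealthA wealth B (exec step s Y1) = wealthA wealth A (exec step s Y1).
    by apply: heq => a h; apply: A0B; left; right.
  have hs2 : wealthA wealth B (exec step s Y2) = wealthA wealth A (exec step s Y2).
    by apply: heq => a h; apply: A0B; right; left.
  have gle : forall Z, (gain wealth step B s Z <= gain wealth step A s Z)%R.
    move=> Z; rewrite /gain hs_.
    have := wealth_mono (exec step s Z) hwealth BA; lia.
  have g2max : forall Z, seq_in (kappa A set0) Z ->
      (gain wealth step A s Z <= gain wealth step A s Y2)%R.
    move=> Z hZ; rewrite /gain; have := Hm2 (v Z) (ex_intro _ Z (conj hZ erefl)).
    rewrite -eY2 /v; lia.
  have g1max : forall Z, seq_in (kappa A P) Z ->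
      (gain wealth step A s Z <= gain wealth step A s Y1)%R.
    move=> Z hZ; rewrite /gain; have := Hm1 (v Z) (ex_intro _ Z (conj hZ erefl)).
    rewrite -eY1 /v; lia.
  have ksub : forall Q, kappa B Q `<=` kappa A Q.
    by move=> Q; apply: (ded_monotone hkappa BA (@subset_refl _ Q)).
  have uGA : uG wealth step kappa A s = gain wealth step A s Y2.
    rewrite /uG; apply: (@max_transfer _ _ (seq_in (kappa A set0)) _ (gain wealth step A s)) => //.
  have uGB : uG wealth step kappa B s = gain wealth step A s Y2.
    rewrite /uG; apply: (@max_transfer _ _ (seq_in (kappa A set0)) (gain wealth step B s) (gain wealth step A s)) => //.
    - apply: seq_in_mono HF2; apply: (ded_monotone hkappa _ (@subset_refl _ set0)).
      by move=> a h; apply: A0B; right; right; right.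
    - by rewrite /gain hs_ hs2.
    - by move=> Z; apply: seq_in_mono.
  have -> : MEV wealth step kappa A s P = xG wealth step kappa A s Y1.
    rewrite /MEV; apply: (@max_transfer _ _ (seq_in (kappa A P)) _ (xG wealth step kappa A s)) => //.
    by move=> Z hZ; rewrite /xG; apply: lerB => //; exact: g1max.
  rewrite /MEV; apply: (@max_transfer _ _ (seq_in (kappa A P)) (xG wealth step kappa B s) (xG wealth step kappa A s)).
  - apply: seq_in_mono HF1; apply: (ded_monotone hkappa _ (@subset_refl _ P)).
    by move=> a h; apply: A0B; right; right; left.
  - by rewrite /xG uGA uGB /gain hs_ hs1.
  - by move=> Z hZ; rewrite /xG; apply: lerB => //; exact: g1max.
  - by move=> Z; apply: seq_in_mono.
  - by move=> Z _; rewrite /xG uGA uGB; apply: lerB.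
exists A0; split => //.
- rewrite !finite_setU; split; split; try split; try apply: finite_setIr; auto.
- by move=> B A0B BA; rewrite key // key.
Qed.
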